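(* Let $(x_t^{**},y_t^{**})$, with $y_t^{**}=(\gamma^{**}_{1t},\dots,\gamma^{**}_{It})$, be a global minimax point on $\mathcal{X}\times\mathcal{Y}$ of \[ (x,y)\mapsto\sum_{n<t}\Big[L_n(x,y)+\frac{\lambda}{n^{1/9}}\sum_{i=1}^I\log(\gamma_i+1)\Big], \] let $(x_t^*,y_t^* )$ be a global minimax point on $\mathcal{X}\times\mathcal{Y}$ of $\sum_{n<t}L_n(x,y)$, and let $y_t^{\ddagger}=(\gamma^{\ddagger}_{1t},\dots,\gamma^{\ddagger}_{It})\in\arg\max_{y\in\mathcal{Y}}\sum_{n<t}\big[L_n(x_t^*,y)+\frac{\lambda}{n^{1/9}}\sum_{i=1}^I\log(\gamma_i+1)\big]$. Then \[ \sum_{n<t}\Big[L_n(x_t^{**},y_t^{**})+\frac{\lambda}{n^{1/9}}\sum_{i=1}^I\log(\gamma^{**}_{it}+1)\Big]\ge\min_{x\in\mathcal{X}}\max_{y\in\mathcal{Y}}\sum_{n<t}L_n(x,y) \] and \[ \sum_{n<t}\Big[L_n(x_t^{**},y_t^{**})-\frac{\lambda}{n^{1/9}}\sum_{i=1}^I\log(\gamma^{\ddagger}_{it}+1)\Big]\le\min_{x\in\mathcal{X}}\max_{y\in\mathcal{Y}}\sum_{n<t}L_n(x,y). \]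
   Context: Let $\mathcal{X}\subseteq\mathbb{R}^d$ be compact. For $t=1,\dots,T$, $f_t,c_{it}:\mathcal{X}\to\mathbb{R}$ ($i=1,\dots,I$) are $G_0$-Lipschitz w.r.t. $\ell_1$, $b_i\ge0$, and for $y=(\gamma_1,\dots,\gamma_I)$, $L_t(x,y)=f_t(x)+\sum_i\gamma_i[c_{it}(x)-b_i]$. Fix constants $\lambda>0$, $y_{\max}>0$ and $\mathcal{Y}=[0,y_{\max}]^I$. A global minimax point of $h$ on $\mathcal{X}\times\mathcal{Y}$ is $(x^*,y^* )$ with $h(x^*,y)\le h(x^*,y^* )\le\max_{y'\in\mathcal{Y}}h(x,y')$ for all $x\in\mathcal{X},y\in\mathcal{Y}$. *)

(* Defs.v *)
From HB Require Import structures.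
From mathcomp Require Import all_boot all_order all_algebra.
From mathcomp Require Import all_classical all_reals all_analysis.
Set Implicit Arguments. Unset Strict Implicit. Unset Printing Implicit Defensive.
Import Order.TTheory GRing.Theory Num.Theory.
Import numFieldNormedType.Exports.
Local Open Scope classical_set_scope.
Local Open Scope ring_scope.

Definition Lag (R : realType) (d I : nat) (f : nat -> 'rV[R]_d -> R)
  (c : nat -> 'I_I -> 'rV[R]_d -> R) (b : 'I_I -> R) (n : nat)
  (x : 'rV[R]_d) (y : 'rV[R]_I) : R :=
  f n x + \sum_(i < I) y 0 i * (c n i x - b i).

Definition reg (R : realType) (I : nat) (lam : R) (n : nat) (y : 'rV[R]_I) : R :=
  lam / (n%:R `^ (9%:R)^-1) * \sum_(i < I) ln (y 0 i + 1).

Definition Ybox (R : realType) (I : nat) (ymax : R) : set 'rV[R]_I :=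
  [set y | forall i, 0 <= y 0 i <= ymax].

(* max_{y' in Y} h(x, y'), written as a supremum (attained under the
   standing assumptions) *)
Definition maxY (R : realType) (d I : nat) (Y : set 'rV[R]_I)
  (h : 'rV[R]_d -> 'rV[R]_I -> R) (x : 'rV[R]_d) : R :=
  sup [set h x y | y in Y].

Definition minmax (R : realType) (d I : nat) (X : set 'rV[R]_d) (Y : set 'rV[R]_I)
  (h : 'rV[R]_d -> 'rV[R]_I -> R) : R :=
  inf [set maxY Y h x | x in X].

Definition global_minimax (R : realType) (d I : nat) (X : set 'rV[R]_d)
  (Y : set 'rV[R]_I) (h : 'rV[R]_d -> 'rV[R]_I -> R) (xs : 'rV[R]_d) (ys : 'rV[R]_I) : Prop :=
  X xs /\ Y ys /\
  forall x y, X x -> Y y -> h xs y <= h xs ys /\ h xs ys <= maxY Y h x.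

Definition lipschitz_l1 (R : realType) (d : nat) (X : set 'rV[R]_d) (G0 : R)
  (g : 'rV[R]_d -> R) : Prop :=
  forall x x', X x -> X x' -> `|g x - g x'| <= G0 * \sum_(j < d) `|x 0 j - x' 0 j|.

(* Main.v *)
Require Import Defs.
From HB Require Import structures.
From mathcomp Require Import all_boot all_order all_algebra.
From mathcomp Require Import all_classical all_reals all_analysis.
Import Order.TTheory GRing.Theory Num.Theory.
Import numFieldNormedType.Exports.
Local Open Scope classical_set_scope.
Local Open Scope ring_scope.

Theorem lemma9 (R : realType) (d I : nat) (X : set 'rV[R]_d) (G0 : R)
  (f : nat -> 'rV[R]_d -> R) (c : nat -> 'I_I -> 'rV[R]_d -> R) (b : 'I_I -> R)
  (lam ymax : R) (t : nat)
  (xss xs : 'rV[R]_d) (yss ys ydd : 'rV[R]_I) :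
  compact X ->
  (forall n, lipschitz_l1 X G0 (f n)) ->
  (forall n i, lipschitz_l1 X G0 (c n i)) ->
  (forall i, 0 <= b i) ->
  0 < lam -> 0 < ymax ->
  global_minimax X (@Ybox R I ymax)
    (fun x y => \sum_(1 <= n < t) (Lag f c b n x y + reg lam n y)) xss yss ->
  global_minimax X (@Ybox R I ymax)
    (fun x y => \sum_(1 <= n < t) Lag f c b n x y) xs ys ->
  @Ybox R I ymax ydd ->
  (forall y, @Ybox R I ymax y ->
     \sum_(1 <= n < t) (Lag f c b n xs y + reg lam n y)
       <= \sum_(1 <= n < t) (Lag f c b n xs ydd + reg lam n ydd)) ->
  minmax X (@Ybox R I ymax) (fun x y => \sum_(1 <= n < t) Lag f c b n x y)
    <= \sum_(1 <= n < t) (Lag f c b n xss yss + reg lam n yss) /\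
  \sum_(1 <= n < t) (Lag f c b n xss yss - reg lam n ydd)
    <= minmax X (@Ybox R I ymax) (fun x y => \sum_(1 <= n < t) Lag f c b n x y).
Proof.
move=> _ _ _ _ lam0 _ [Xxss [Yyss Hss]] [Xxs [Yys Hs]] Ydd Hdd.
set H := (fun x y => \sum_(1 <= n < t) Lag f c b n x y).
set Hr := (fun x y => \sum_(1 <= n < t) (Lag f c b n x y + reg lam n y)).
have reg0 : forall (n : nat) (y : 'rV[R]_I), Ybox ymax y -> 0 <= reg lam n y.
  move=> n y Yy; rewrite /reg. apply: mulr_ge0.
    by apply: divr_ge0; [exact: ltW | exact: powR_ge0].
  apply: sumr_ge0 => i _; apply: ln_ge0.
  by have /andP[h _] := Yy i; rewrite lerDr.
have HHr : forall (x : 'rV[R]_d) (y : 'rV[R]_I), Ybox ymax y -> H x y <= Hr x y.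
  move=> x y Yy; rewrite /H /Hr /= [X in _ <= X]big_split /= lerDl.
  by apply: sumr_ge0 => n _; exact: reg0.
have lbmm : H xs ys <= minmax X (Ybox ymax) H.
  apply: lb_le_inf; first by exists (maxY (Ybox ymax) H xs), xs.
  by move=> _ [x Xx <-]; have [_ ?] := Hs x ys Xx Yys.
split.
  apply: (le_trans (y := maxY (Ybox ymax) H xss)).
    have := ge_inf (E := [set maxY (Ybox ymax) H x | x in X]).
    apply; first by exists (H xs ys) => _ [x Xx <-]; have [_ ?] := Hs x ys Xx Yys.
    by exists xss.
  apply: ge_sup; first by exists (H xss ys), ys.
  move=> _ [y Yy <-]; apply: (le_trans (HHr _ _ Yy)).
  by have [? _] := Hss xss y Xxss Yy.
rewrite sumrB lerBlDr.
apply: (le_trans (HHr _ _ Yyss)).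
have [_ h1] := Hss xs yss Xxs Yyss; apply: (le_trans h1).
have h2 : maxY (Ybox ymax) Hr xs <= Hr xs ydd.
  apply: ge_sup; first by exists (Hr xs ys), ys.
  by move=> _ [y Yy <-]; exact: Hdd.
apply: (le_trans h2).
rewrite /Hr /= [X in X <= _]big_split /= lerD2r.
apply: (le_trans _ lbmm).
by have [h3 _] := Hs xs ydd Xxs Ydd; exact: h3.
Qed.
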